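(* Let $I$ be a connected and locally connected topological space and $h:I\to\mathbb{R}$ a positive continuous function attaining its lower bound at $v\in I$. Let $x\in I$ and $\lambda\in[h(v),h(x)]$. Then there is $y\in C_{x,\lambda}$ with $h(y)=\lambda$.
   Context: For $x\in I$ and $\lambda\le h(x)$, $C_{x,\lambda}$ denotes the maximal connected subset of $\{y\in I: h(y)\ge\lambda\}$ containing $x$. *)

(* Defs.v *)
From HB Require Import structures.
From mathcomp Require Import all_boot all_order all_algebra.
From mathcomp Require Import all_classical all_reals all_analysis.
Set Implicit Arguments. Unset Strict Implicit. Unset Printing Implicit Defensive.
Import Order.TTheory GRing.Theory Num.Theory.
Local Open Scope classical_set_scope.
Local Open Scope ring_scope.

Definition locally_connected (T : topologicalType) :=
  forall (x : T) (U : set T), nbhs x U ->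
    exists V : set T, [/\ open V, V x, connected V & V `<=` U].

Definition superlevel_component (T : topologicalType) (R : realType)
  (h : T -> R) (x : T) (lam : R) : set T :=
  connected_component [set y | lam <= h y] x.

(* Main.v *)
Require Import Defs.
From HB Require Import structures.
From mathcomp Require Import all_boot all_order all_algebra.
From mathcomp Require Import all_classical all_reals all_analysis.
Import Order.TTheory GRing.Theory Num.Theory numFieldNormedType.Exports.
Local Open Scope classical_set_scope.
Local Open Scope ring_scope.

Theorem mainTheorem5 (R : realType) (I : topologicalType) (h : I -> R) (v x : I) (lam : R) :
  connected (@setT I) -> locally_connected I ->
  continuous h -> (forall y, 0 < h y) -> (forall y, h v <= h y) ->
  h v <= lam <= h x ->
  exists y, superlevel_component h x lam y /\ h y = lam.
Proof.
move=> cI lc hc _ hmin /andP[vl lx].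
apply: contrapT => Hno.
set A := [set y | lam <= h y].
set C := superlevel_component h x lam.
have Cgt : forall z, C z -> lam < h z.
  move=> z Cz; rewrite lt_neqAle.
  have Az : lam <= h z by have := connected_component_sub Cz.
  rewrite Az andbT; apply/eqP => e; apply: Hno; by exists z.
have Cx : C x by apply: connected_component_refl.
have CT : C = setT.
  apply: cI.
  - by exists x.
  - exists C; last by rewrite setTI.
    rewrite openE => z Cz.
    have nz : nbhs z (h @^-1` [set r | lam < r]).
      apply: hc; apply: open_nbhs_nbhs; split; first exact: open_gt.
      exact: Cgt.
    have [V [oV Vz cV VS]] := lc _ _ nz.
    rewrite /interior; apply: (filterS _ (open_nbhs_nbhs (conj oV Vz))).
    have -> : C = connected_component A z.
      exact: same_connected_component.
    apply: connected_component_max => // y /VS /= /ltW //.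
  - exists C; last by rewrite setTI.
    apply: component_closed.
    apply: (@preimage_closed _ _ h [set r | lam <= r]); last exact: closed_ge.
    by move=> ? _; apply: hc.
have : lam < h v by apply: Cgt; rewrite CT.
by rewrite ltNge vl.
Qed.
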